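(* Let $d,r$ be integers with $d\ge1$ and $1\le r\le\binom{m+d}{d}-r_d$. Then $d_r(\mathrm{PRM}_q(d,m))=\mathsf{p}_m-\overline{e}_r(d,m)$.
   Context: $q$ is a prime power, $\mathbb{F}_q$ the finite field with $q$ elements, $m$ a positive integer, $\mathsf{p}_m=q^m+\dots+q+1=|\mathbb{P}^m(\mathbb{F}_q)|$. A monomial $\mu\neq1$ in $x_0,\dots,x_m$ written $x_0^{a_0}\cdots x_k^{a_k}$ with $a_k>0$ is projectively reduced if $a_0,\dots,a_{k-1}\le q-1$; $1$ is projectively reduced; a polynomial is projectively reduced if it is a linear combination of projectively reduced monomials. $r_d$ is the dimension of the degree-$d$ component of the ideal generated by $\{x_i^qx_j-x_ix_j^q:0\le i<j\le m\}$; $\binom{m+d}{d}-r_d=\dim\mathrm{PRM}_q(d,m)$. $\overline{e}_r(d,m)$ is the maximum number of points of $\mathbb{P}^m(\mathbb{F}_q)$ at which $G_1,\dots,G_r$ all vanish, over families of $r$ linearly independent projectively reduced homogeneous polynomials of degree $d$. Fix representatives $P_1,\dots,P_{\mathsf{p}_m}\in\mathbb{F}_q^{m+1}$ of the points of $\mathbb{P}^m(\mathbb{F}_q)$; $\mathrm{PRM}_q(d,m)$ is the image of the homogeneous degree-$d$ polynomials under $F\mapsto(F(P_1),\dots,F(P_{\mathsf{p}_m}))$. For a linear code $C$ and $1\le r\le\dim C$, $d_r(C)=\min\{|\mathrm{Supp}(D)|:D\subseteq C\text{ subspace},\dim D=r\}$, with $\mathrm{Supp}(D)$ the set of coordinates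 where some element of $D$ is nonzero. *)

(* Defs.v *)
From HB Require Import structures.
From mathcomp Require Import all_boot all_order all_algebra all_field.
From mathcomp Require Import mpoly.
From Stdlib Require Import ClassicalEpsilon.
Set Implicit Arguments.
Unset Strict Implicit.
Unset Printing Implicit Defensive.
Import GRing.Theory.
Local Open Scope ring_scope.

Definition classb (P : Prop) : bool :=
  if excluded_middle_informative P then true else false.

Section PRM.
Variable F : finFieldType.
Variable m : nat.

Definition qF : nat := #|F|.
Definition pm : nat := (\sum_(i < m.+1) qF ^ i)%N.

Notation poly := {mpoly F[m.+1]}.

Definition proj_reduced_mon (mu : 'X_{1..m.+1}) : bool :=
  (mu == 0%MM) ||
  [exists k : 'I_m.+1,
     [&& (0 < mu k)%N,
         [forall j : 'I_m.+1, (k < j)%N ==> (mu j == 0%N)] &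
         [forall j : 'I_m.+1, (j < k)%N ==> (mu j <= qF - 1)%N]]].

Definition proj_reduced (f : poly) : bool :=
  all proj_reduced_mon (msupp f).

Definition lin_indep k (G : 'I_k -> poly) : Prop :=
  forall c : 'I_k -> F, \sum_(i < k) c i *: G i = 0 -> forall i, c i = 0.

Definition gen_poly (i j : 'I_m.+1) : poly :=
  'X_i ^+ qF * 'X_j - 'X_i * 'X_j ^+ qF.

Definition in_ideal (f : poly) : Prop :=
  exists h : 'I_m.+1 -> 'I_m.+1 -> poly,
    f = \sum_(i < m.+1) \sum_(j < m.+1 | (i < j)%N) h i j * gen_poly i j.

(* r_d : dimension of the degree-d component of that ideal, i.e. the
   maximal number of linearly independent homogeneous degree-d polynomials
   in the ideal (bounded by binom(m+d,d), the dimension of all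
   homogeneous polynomials of degree d). *)
Definition rd (d : nat) : nat :=
  \max_(k < 'C(m + d, d).+1 |
         classb (exists G : 'I_k -> poly,
                   (forall i, G i \is d.-homog /\ in_ideal (G i)) /\
                   lin_indep G)) k.

(* Points of P^m(F_q), represented canonically by the vectors whose last
   nonzero coordinate equals 1. *)
Definition normalized (v : 'rV[F]_m.+1) : bool :=
  [exists k : 'I_m.+1,
     (v 0 k == 1) && [forall j : 'I_m.+1, (k < j)%N ==> (v 0 j == 0)]].

Definition ev (f : poly) (v : 'rV[F]_m.+1) : F := f.@[fun i => v 0 i].

Definition n_common_zeros k (G : 'I_k -> poly) : nat :=
  #|[set v : 'rV[F]_m.+1 | normalized v && [forall i, ev (G i) v == 0]]|.

Definition ebar (d r : nat) : nat :=
  \max_(k < pm.+1 |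
         classb (exists G : 'I_r -> poly,
                   [/\ forall i, G i \is d.-homog,
                       forall i, proj_reduced (G i),
                       lin_indep G &
                       n_common_zeros G = k])) k.

Definition is_proj_reps (P : 'I_pm -> 'rV[F]_m.+1) : Prop :=
  (forall i, P i != 0) /\
  (forall v : 'rV[F]_m.+1, v != 0 -> exists i, exists c : F, v = c *: P i) /\
  (forall i j (c : F), P i = c *: P j -> i = j).

Definition PRM (P : 'I_pm -> 'rV[F]_m.+1) (d : nat) (x : 'rV[F]_pm) : Prop :=
  exists f : poly, f \is d.-homog /\ x = \row_i ev f (P i).

End PRM.

Definition supp (F : finFieldType) n (D : {vspace 'rV[F]_n}) : {set 'I_n} :=
  [set j : 'I_n | [exists x : 'rV[F]_n, (x \in D) && (x 0 j != 0)]].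

(* r-th generalized Hamming weight of a linear code C <= F^n (C given by its
   membership predicate): the minimum of |Supp(D)| over subspaces D of C of
   dimension r (every such support size is <= n, hence in 'I_n.+1). *)
Definition ghw (F : finFieldType) n (C : 'rV[F]_n -> Prop) (r : nat) : nat :=
  \big[minn/n]_(k < n.+1 |
       classb (exists D : {vspace 'rV[F]_n},
                 [/\ (forall x, x \in D -> C x), \dim D = r & #|supp D| = k]))
    (k : nat).

(* Main.v *)
Require Import Defs.
From HB Require Import structures.
From mathcomp Require Import all_boot all_order all_algebra all_field.
From mathcomp Require Import mpoly.
From mathcomp Require Import zify.
From Stdlib Require Import ClassicalEpsilon.
Set Implicit Arguments.
Unset Strict Implicit.
Unset Printing Implicit Defensive.
Import GRing.Theory.
Local Open Scope ring_scope.


Section Gen.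
Variable (F : finFieldType) (n : nat).
Local Notation q := #|F|.
Implicit Types (p : {mpoly F[n]}) (mu : 'X_{1..n}).

Lemma mpoly_supp0 p : (forall mu, mu \in msupp p -> p@_mu = 0) -> p = 0.
Proof.
move=> h; apply/mpolyP => mu; rewrite mcoeff0.
case: (boolP (mu \in msupp p)) => [/h //|/memN_msupp_eq0 //].
Qed.

Lemma sum_pick (s : seq 'X_{1..n}) (P : pred 'X_{1..n}) (G : 'X_{1..n} -> F)
   (t : 'X_{1..n} -> 'X_{1..n}) mu0 :
  uniq s -> mu0 \in s -> P mu0 ->
  (forall mu, mu \in s -> P mu -> t mu = t mu0 -> mu = mu0) ->
  \sum_(mu <- s | P mu) G mu * (t mu == t mu0)%:R = G mu0.
Proof.
move=> us ms Pm ht.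
rewrite big_mkcond (bigD1_seq mu0) //= Pm eqxx mulr1 big_seq_cond big1 ?addr0 //.
move=> mu /andP[mus nmu]; case: ifP => // Pmu.
case: eqP => [/(ht _ mus Pmu) e|]; last by rewrite mulr0.
by rewrite e eqxx in nmu.
Qed.

Lemma msupp_sumX (s : seq 'X_{1..n}) (P : pred 'X_{1..n}) (c : 'X_{1..n} -> F)
   (t : 'X_{1..n} -> 'X_{1..n}) mu' :
  mu' \in msupp (\sum_(mu <- s | P mu) c mu *: 'X_[t mu]) ->
  exists2 mu, (mu \in s) && P mu & mu' = t mu.
Proof.
move=> /msupp_sum_le /flattenP [l /mapP [mu]].
rewrite mem_filter => /andP[Pmu mus] -> /msuppZ_le; rewrite msuppX inE => /eqP ->.
by exists mu; rewrite ?mus ?Pmu.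
Qed.

Definition zk (k : 'I_n) mu : 'X_{1..n} :=
  [multinom (if i == k then 0%N else mu i) | i < n].

Definition setk (x : 'I_n -> F) (k : 'I_n) (t : F) : 'I_n -> F :=
  fun i => if i == k then t else x i.

Lemma prod_setk x k t mu :
  \prod_i (setk x k t i) ^+ mu i = t ^+ mu k * \prod_i x i ^+ zk k mu i.
Proof.
rewrite (bigD1 k) //= [X in _ = _ * X](bigD1 k) //= /setk eqxx mnmE eqxx expr0 mul1r.
congr (_ * _); apply: eq_bigr => i /negbTE hi; rewrite mnmE hi; by [] || (idtac; fail).
Qed.

Lemma Zlemma (k : nat) p :
  (forall mu, mu \in msupp p -> forall i : 'I_n,
       (mu i < q)%N && ((k <= i)%N ==> (mu i == 0%N))) ->
  (forall x, p.@[x] = 0) -> p = 0.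
Proof.
elim: k p => [|k IH] p hsupp hev.
  apply: mpoly_supp0 => mu0 mu0s.
  have z0 mu : mu \in msupp p -> mu = 0%MM.
    move=> mus; apply/mnmP => i; rewrite mnm0E.
    by have /andP[_ /eqP] := hsupp _ mus i; apply.
  have := hev (fun _ => 0); rewrite mevalE => h.
  rewrite -(@sum_pick (msupp p) predT (fun mu => p@_mu) (fun _ => 0%MM) mu0) ?msupp_uniq //; last by move=> mu mus _ _; rewrite (z0 _ mus) (z0 _ mu0s).
  apply: (etrans _ h).
  apply: eq_big_seq => mu mus; rewrite eqxx mulr1 (z0 _ mus) big1 ?mulr1 // => i _.
  by rewrite mnm0E expr0.
case: (ltnP k n) => [kn|nk]; last first.
  apply: IH hev => mu mus i; have /andP[-> /implyP h] := hsupp _ mus i.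
  by rewrite /= leqNgt (leq_trans (ltn_ord i) nk).
pose kk : 'I_n := Ordinal kn.
pose pe (e : nat) := \sum_(mu <- msupp p | mu kk == e) p@_mu *: 'X_[zk kk mu].
have pe0 e : pe e = 0.
  apply: IH.
    move=> mu' /msupp_sumX [mu /andP[mus _] ->] i; rewrite mnmE.
    have /andP[hq /implyP hz] := hsupp _ mus i.
    case: ifP => [_|ni]; first by rewrite (leq_ltn_trans (leq0n _) hq) implybT.
    rewrite hq /=; apply/implyP => ki; apply: hz.
    rewrite ltn_neqAle ki andbT; apply: contraFneq ni => e'.
    by apply/eqP/val_inj; rewrite /= -e'.
  move=> x.
  pose Q : {poly F} := \sum_(mu <- msupp p) (p@_mu * \prod_i x i ^+ zk kk mu i) *: 'X^(mu kk).
  have QE t : Q.[t] = p.@[setk x kk t].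
    rewrite horner_sum mevalE; apply: eq_bigr => mu _.
    by rewrite hornerZ hornerXn prod_setk -mulrA [t ^+ _ * _]mulrC.
  have Q0 : Q = 0.
    apply/eqP; apply: contraT => nQ.
    have hall : all (root Q) (enum F) by apply/allP => t _; rewrite /root QE hev.
    have := max_poly_roots nQ hall (enum_uniq _).
    rewrite ltnNge => /negP h; exfalso; apply: h; rewrite -cardE.
    apply: (leq_trans (size_sum _ _ _)); apply/bigmax_leqP_seq => mu mus _.
    apply: (leq_trans (size_scale_leq _ _)); rewrite size_polyXn.
    by have /andP[] := hsupp _ mus kk.
  have : Q`_e = 0 by rewrite Q0 coef0.
  rewrite /Q coef_sumMXn => <-.
  rewrite /pe raddf_sum /=; apply: eq_big => [mu //|mu _].
  by rewrite mevalZ mevalX.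
apply: mpoly_supp0 => mu0 mu0s.
have := pe0 (mu0 kk).
move/(congr1 (mcoeff (zk kk mu0))).
rewrite mcoeff0 /pe raddf_sum /=.
under eq_bigr do rewrite mcoeffZ mcoeffX.
rewrite (@sum_pick _ _ (fun mu => p@_mu) (zk kk) mu0) ?msupp_uniq //.
move=> mu mus /eqP hk hz; apply/mnmP => i.
case: (i =P kk) => [->|/eqP ni]; first exact hk.
have := congr1 (fun m : 'X_{1..n} => m i) hz; by rewrite /= !mnmE (negbTE ni).
Qed.


Lemma q_gt1 : (1 < q)%N.
Proof. exact: card_finNzRing_gt1. Qed.

Lemma expf_shift (x : F) b t : (0 < b)%N -> x ^+ (b + t * q.-1) = x ^+ b.
Proof.
move=> b0; elim: t => [|t IH]; first by rewrite mul0n addn0.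
have key c : (0 < c)%N -> x ^+ (c + q.-1) = x ^+ c.
  case: c => // c _; rewrite addSn -addnS prednK ?(ltn_trans _ q_gt1) // exprD expf_card.
  by rewrite exprS mulrC.
by rewrite mulSn addnCA addnC key // (leq_trans b0) ?leq_addr.
Qed.

Definition rr (a : nat) : nat := if a == 0%N then 0%N else ((a.-1) %% q.-1).+1.

Lemma rr_decomp a : a = (rr a + ((a.-1) %/ q.-1) * q.-1)%N.
Proof.
rewrite /rr; case: a => [|a] //=; first by rewrite div0n.
by rewrite addSn addnC -divn_eq.
Qed.

Lemma rr_le a : (rr a <= a)%N.
Proof. by rewrite {2}(rr_decomp a) leq_addr. Qed.

Lemma rr_bound a : (rr a <= q.-1)%N.
Proof.
rewrite /rr; case: ifP => // _; apply: ltn_pmod.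
by rewrite -ltnS prednK ?q_gt1 // (ltn_trans _ q_gt1).
Qed.

Lemma rr_eq0 a : (rr a == 0%N) = (a == 0%N).
Proof. by rewrite /rr; case: ifP. Qed.

Lemma rr_exp (x : F) a : x ^+ a = x ^+ rr a.
Proof.
case: (posnP a) => [->//|a0].
rewrite {1}(rr_decomp a) expf_shift // lt0n rr_eq0 -lt0n //.
Qed.

Lemma meval_homog p d c (x : 'I_n -> F) :
  p \is d.-homog -> p.@[fun i => c * x i] = c ^+ d * p.@[x].
Proof.
move=> /dhomogP hd; rewrite !mevalE mulr_sumr; apply: eq_big_seq => mu mus.
rewrite mulrCA; congr (_ * _).
under eq_bigr do rewrite exprMn.
rewrite big_split /= prodrXr -(hd _ mus); congr (_ ^+ _ * _); exact: esym (mdegE mu).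
Qed.

End Gen.


Section Red.
Variable (F : finFieldType) (m : nat).
Local Notation n := m.+1.
Local Notation q := #|F|.
Implicit Types (mu : 'X_{1..n}).

Definition topn mu : nat := \max_(i < n | mu i != 0%N) (i : nat).

Lemma topn_lt mu : (topn mu < n)%N.
Proof. by rewrite ltnS; apply/bigmax_leqP => i _; rewrite -ltnS. Qed.

Definition topo mu : 'I_n := Ordinal (topn_lt mu).

Lemma topn_ge mu (i : 'I_n) : mu i != 0%N -> (i <= topn mu)%N.
Proof. by move=> h; apply: (leq_bigmax_cond (F := fun i : 'I_n => (i : nat))). Qed.

Lemma mu_gt_top mu (i : 'I_n) : (topn mu < i)%N -> mu i = 0%N.
Proof.
move=> h; apply/eqP; apply: contraTT h => /topn_ge; by rewrite -leqNgt.
Qed.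

Lemma topo_nz mu : mu != 0%MM -> mu (topo mu) != 0%N.
Proof.
move=> nz.
have : (0 < #|[pred i : 'I_n | mu i != 0%N]|)%N.
  apply/card_gt0P; apply/existsP; apply: contraR nz; rewrite negb_exists => /forallP h.
  apply/eqP/mnmP => i; rewrite mnm0E; by have := h i; rewrite negbK => /eqP.
move=> /(eq_bigmax_cond (fun i : 'I_n => (i : nat))) [i0 hi0 e].
have -> : topo mu = i0 by apply: val_inj; rewrite /= /topn e.
exact: hi0.
Qed.

Definition red mu : 'X_{1..n} :=
  [multinom (if (i < topn mu)%N then rr F (mu i)
             else if (i : nat) == topn mu then
               (mu i + \sum_(j < n | (j < topn mu)%N) (mu j - rr F (mu j)))%N
             else 0%N) | i < n].

Lemma red0 mu : mu = 0%MM -> red mu = mu.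
Proof.
move=> ->; apply/mnmP => i; rewrite mnmE mnm0E.
have t0 : topn 0%MM = 0%N.
  by apply/eqP; rewrite -leqn0; apply/bigmax_leqP => j; rewrite mnm0E eqxx.
rewrite t0 ltn0; case: ifP => // _.
by rewrite add0n big1 // => j; rewrite ltn0.
Qed.

Lemma red_deg mu : mdeg (red mu) = mdeg mu.
Proof.
pose S := (\sum_(j < n | (j < topn mu)%N) (mu j - rr F (mu j)))%N.
have pw (i : 'I_n) : (red mu i + (if (i < topn mu)%N then mu i - rr F (mu i) else 0)
     = mu i + (if (i : nat) == topn mu then S else 0))%N.
  rewrite mnmE; case: ltnP => hi.
    by rewrite (ltn_eqF hi) addn0 subnKC // rr_le.
  case: eqP => [_|ne]; first by rewrite addn0.
  rewrite !addn0 mu_gt_top //.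
  by rewrite ltn_neqAle hi andbT eq_sym; apply/eqP.
apply/eqP; rewrite !mdegE -(eqn_add2r S).
have e1 : S = (\sum_(i < n) (if (i < topn mu)%N then mu i - rr F (mu i) else 0))%N.
  by rewrite /S big_mkcond.
have e2 : S = (\sum_(i < n) (if (i : nat) == topn mu then S else 0))%N.
  rewrite (bigD1 (topo mu)) //= eqxx big1 ?addn0 // => i ni.
  case: eqP => // e; case/eqP: ni; exact: val_inj.
rewrite {1}e1 {1}e2 -!big_split /=; apply/eqP/eq_bigr => i _; exact: pw.
Qed.

Lemma red_eval (x : 'I_n -> F) mu :
  \prod_i x i ^+ red mu i = \prod_i x i ^+ mu i.
Proof.
case: (eqVneq mu 0%MM) => [/red0 -> //|nz].
rewrite (bigD1 (topo mu)) //= [RHS](bigD1 (topo mu)) //=.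
congr (_ * _); last first.
  apply: eq_bigr => i ni; rewrite mnmE; case: ltnP => hi; first by rewrite -rr_exp.
  have ne : (i : nat) != topn mu by apply: contra ni => /eqP e; apply/eqP/val_inj.
  rewrite (negbTE ne) mu_gt_top //.
  by rewrite ltn_neqAle hi andbT eq_sym.
rewrite mnmE /= ltnn eqxx.
have -> : (\sum_(j < n | (j < topn mu)%N) (mu j - rr F (mu j)) =
          (\sum_(j < n | (j < topn mu)%N) ((mu j).-1 %/ q.-1)) * q.-1)%N.
  rewrite big_distrl /=; apply: eq_bigr => j _.
  by rewrite {1}(rr_decomp F (mu j)) addKn.
by rewrite expf_shift // lt0n topo_nz.
Qed.

Lemma red_reduced mu : proj_reduced_mon F (red mu).
Proof.
rewrite /proj_reduced_mon; case: (eqVneq mu 0%MM) => [e|nz].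
  by rewrite red0 // e eqxx.
apply/orP; right; apply/existsP; exists (topo mu); apply/and3P; split.
- rewrite mnmE /= ltnn eqxx; apply: (leq_trans _ (leq_addr _ _)).
  by rewrite lt0n topo_nz.
- apply/forallP => j; apply/implyP => hj; rewrite mnmE /= ltnNge (ltnW hj) /=.
  by rewrite (gtn_eqF hj).
- apply/forallP => j; apply/implyP => hj; rewrite mnmE /= hj /qF subn1.
  exact: rr_bound.
Qed.

Definition redp (f : {mpoly F[n]}) : {mpoly F[n]} :=
  \sum_(mu <- msupp f) f@_mu *: 'X_[red mu].

Lemma redp_eval f x : (redp f).@[x] = f.@[x].
Proof.
rewrite /redp raddf_sum mevalE /=; apply: eq_bigr => mu _.
by rewrite mevalZ mevalX red_eval.
Qed.

Lemma redp_homog f d : f \is d.-homog -> redp f \is d.-homog.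
Proof.
move=> /dhomogP hd; rewrite /redp big_seq; apply: rpred_sum => mu mus.
apply: rpredZ; rewrite dhomogX; apply/eqP.
rewrite -(hd _ mus); exact: red_deg.
Qed.

Lemma redp_reduced f : proj_reduced (redp f).
Proof.
apply/allP => mu' /msupp_sumX [mu _ ->]; exact: red_reduced.
Qed.


Definition istop mu (k : 'I_n) : bool :=
  (0 < mu k)%N && [forall j : 'I_n, (k < j)%N ==> (mu j == 0%N)].

Definition trunc (k : 'I_n) mu : 'X_{1..n} :=
  [multinom (if (i < k)%N then mu i else 0%N) | i < n].

Lemma reduced_top mu : proj_reduced_mon F mu -> mu != 0%MM ->
  exists2 k, istop mu k & forall j : 'I_n, (j < k)%N -> (mu j <= q.-1)%N.
Proof.
rewrite /proj_reduced_mon => /orP [/eqP -> |]; first by rewrite eqxx.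
move=> /existsP [k /and3P [h1 h2 /forallP h3]] _; exists k; first by rewrite /istop h1.
by move=> j hj; have := h3 j; rewrite hj /qF subn1.
Qed.

Lemma istop_uniq mu k k' : istop mu k -> istop mu k' -> k = k'.
Proof.
move=> /andP [h1 /forallP h2] /andP [h1' /forallP h2'].
apply: val_inj; case: (ltngtP k k') => // hk.
  by move: (h2 k'); rewrite hk /= => /eqP e; rewrite e in h1'.
by move: (h2' k); rewrite hk /= => /eqP e; rewrite e in h1.
Qed.

Lemma istop_gt mu k (j : 'I_n) : istop mu k -> (k < j)%N -> mu j = 0%N.
Proof. by move=> /andP [_ /forallP h] hj; move: (h j); rewrite hj => /eqP. Qed.

Lemma mdeg_trunc mu k : istop mu k -> mdeg mu = (mdeg (trunc k mu) + mu k)%N.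
Proof.
move=> hk; rewrite !mdegE.
have -> : mu k = (\sum_(i < n) (if i == k then mu k else 0))%N.
  by rewrite (bigD1 k) //= eqxx big1 ?addn0 // => i /negbTE ->.
rewrite -big_split /=; apply: eq_bigr => i _; rewrite mnmE.
case: (ltngtP i k) => hi.
- by rewrite -val_eqE (ltn_eqF hi) addn0.
- by rewrite (istop_gt hk hi) -val_eqE (gtn_eqF hi).
- by rewrite add0n (_ : i = k) ?eqxx //; apply: val_inj.
Qed.

Lemma vanish_reduced (d : nat) (g : {mpoly F[n]}) :
  (0 < d)%N -> g \is d.-homog -> proj_reduced g ->
  (forall x, g.@[x] = 0) -> g = 0.
Proof.
move=> d0 /dhomogP hd /allP hred hev.
have nz mu : mu \in msupp g -> mu != 0%MM.
  move=> mus; rewrite -mdeg_eq0; have e : mdeg mu = d := hd _ mus.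
  by rewrite e -lt0n.
have main : forall K : nat, forall mu, mu \in msupp g -> forall k : 'I_n,
    (k : nat) = K -> istop mu k -> g@_mu = 0.
  elim/ltn_ind => K IH mu0 mu0s k kK hk.
  pose h := \sum_(mu <- msupp g | istop mu k) g@_mu *: 'X_[trunc k mu].
  have h0 : h = 0.
    apply: (@Zlemma F n n).
      move=> mu' /msupp_sumX [mu /andP [mus hmu] ->] i; rewrite mnmE.
      have -> : (m < i)%N = false by rewrite ltnNge -ltnS ltn_ord.
      rewrite implyFb andbT.
      case: ifP => hi; last by rewrite (ltn_trans _ (q_gt1 F)).
      have [k' hk' hb] := reduced_top (hred _ mus) (nz _ mus).
      rewrite -(istop_uniq hmu hk') in hb.
      by rewrite (leq_ltn_trans (hb _ hi)) // prednK // (ltn_trans _ (q_gt1 F)).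
    move=> x.
    pose v (i : 'I_n) : F := if (i < k)%N then x i else if i == k then 1 else 0.
    have := hev v; rewrite mevalE (bigID (fun mu => istop mu k)) /=.
    rewrite [X in _ + X]big_seq_cond [X in _ + X]big1 ?addr0; last first.
      move=> mu /andP [mus nt].
      have [k' hk' _] := reduced_top (hred _ mus) (nz _ mus).
      case: (ltngtP k' k) => hkk.
      - by rewrite (IH k' _ mu mus k') ?mul0r // -kK.
      - rewrite (bigD1 k') //= /v ltnNge (ltnW hkk) /= -val_eqE (gtn_eqF hkk).
        move: hk' => /andP [p0 _]; by rewrite expr0n eqn0Ngt p0 mul0r mulr0.
      - have e : k' = k by apply: val_inj.
        by rewrite -e hk' in nt.
    move=> <-; rewrite /h raddf_sum /=; apply: eq_bigr => mu hmu.
    rewrite mevalZ mevalX; congr (_ * _); apply: eq_bigr => i _.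
    rewrite mnmE /v; case: ifP => // hi; case: eqP => [->|ne].
      by rewrite expr1n expr0.
    rewrite (istop_gt hmu) ?expr0 //.
    by rewrite ltn_neqAle leqNgt hi andbT eq_sym; apply/eqP => e; apply: ne; apply: val_inj.
  have := congr1 (mcoeff (trunc k mu0)) h0.
  rewrite mcoeff0 /h raddf_sum /=.
  under eq_bigr do rewrite mcoeffZ mcoeffX.
  rewrite (@sum_pick _ _ _ _ (fun mu => g@_mu) (trunc k) mu0) ?msupp_uniq //.
  move=> mu mus hmu et.
  have ek : mu k = mu0 k.
    have := mdeg_trunc hmu; have := mdeg_trunc hk.
    have e1 : mdeg mu = d := hd _ mus; have e2 : mdeg mu0 = d := hd _ mu0s.
    by rewrite e1 e2 et => -> /eqP; rewrite eqn_add2l => /eqP.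
  apply/mnmP => i; case: (ltngtP i k) => hi.
  - have := congr1 (fun m : 'X_{1..n} => m i) et; by rewrite /= !mnmE hi.
  - by rewrite (istop_gt hmu hi) (istop_gt hk hi).
  - by rewrite (_ : i = k) //; apply: val_inj.
apply: mpoly_supp0 => mu mus.
have [k hk _] := reduced_top (hred _ mus) (nz _ mus).
exact: (main k mu mus k).
Qed.

End Red.


Lemma classbP (Q : Prop) : reflect Q (classb Q).
Proof. by rewrite /classb; case: excluded_middle_informative => h; constructor. Qed.

Section Pts.
Variable (F : finFieldType) (m : nat).
Local Notation n := m.+1.
Implicit Types (v w : 'rV[F]_n).

Lemma ev_scale (f : {mpoly F[n]}) d c v :
  f \is d.-homog -> ev f (c *: v) = c ^+ d * ev f v.
Proof.
move=> hf; rewrite /ev -(meval_homog c _ hf); apply: meval_eq => i.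
by rewrite mxE.
Qed.

Lemma normalized_nz v : normalized v -> v != 0.
Proof.
move=> /existsP [k /andP [/eqP h _]]; apply/eqP => e.
by move: h; rewrite e mxE => /eqP; rewrite eq_sym oner_eq0.
Qed.

Lemma normalize_ex v : v != 0 -> exists2 c, c != 0 & normalized (c *: v).
Proof.
move=> nz.
have : (0 < #|[pred i : 'I_n | v 0%R i != 0%R]|)%N.
  apply/card_gt0P; apply/existsP; apply: contraR nz; rewrite negb_exists => /forallP h.
  apply/eqP/rowP => i; rewrite mxE; by have := h i; rewrite negbK => /eqP.
move=> /(eq_bigmax_cond (fun i : 'I_n => (i : nat))) [k hk e].
exists (v 0 k)^-1; first by rewrite invr_eq0.
apply/existsP; exists k; rewrite mxE mulVf // eqxx /=.
apply/forallP => j; apply/implyP => hj; rewrite mxE.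
case: (eqVneq (v 0 j) 0) => [-> |nj]; first by rewrite mulr0.
have := leq_bigmax_cond (F := fun i : 'I_n => (i : nat)) (P := [pred i | v 0 i != 0]) j nj.
by rewrite e leqNgt hj.
Qed.

Lemma normalized_uniq v w a : normalized v -> normalized w -> v = a *: w -> v = w.
Proof.
move=> /existsP [k /andP [/eqP vk /forallP vj]] /existsP [k' /andP [/eqP wk /forallP wj]] e.
have ek : k = k'.
  apply: val_inj; case: (ltngtP k k') => // h.
  - by move: (vj k'); rewrite h e mxE wk mulr1 /= => /eqP a0; move: vk; rewrite e mxE a0 mul0r => /eqP; rewrite eq_sym oner_eq0.
  - by move: (wj k); rewrite h /= => /eqP w0; move: vk; rewrite e mxE w0 mulr0 => /eqP; rewrite eq_sym oner_eq0.
have a1 : a = 1 by move: vk; rewrite e mxE ek wk mulr1.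
by rewrite e a1 scale1r.
Qed.

End Pts.

Section Main.
Variable (F : finFieldType) (m d : nat) (P : 'I_(pm F m) -> 'rV[F]_m.+1).
Hypothesis hP : is_proj_reps P.
Hypothesis hd : (0 < d)%N.
Local Notation n := m.+1.
Local Notation N := (pm F m).
Local Notation poly := {mpoly F[n]}.

Definition cw (f : poly) : 'rV[F]_N := \row_j ev f (P j).

Lemma cw_sum k (c : 'I_k -> F) (G : 'I_k -> poly) :
  cw (\sum_i c i *: G i) = \sum_i c i *: cw (G i).
Proof.
apply/rowP => j; rewrite !mxE summxE /ev raddf_sum /=; apply: eq_bigr => i _.
by rewrite mevalZ !mxE.
Qed.

Lemma reduced_sum k (c : 'I_k -> F) (G : 'I_k -> poly) :
  (forall i, proj_reduced (G i)) -> proj_reduced (\sum_i c i *: G i).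
Proof.
move=> h; apply/allP => mu /msupp_sum_le /flattenP [l /mapP [i _ ->]].
by move=> /msuppZ_le; apply/allP/h.
Qed.

Lemma homog_sum k (c : 'I_k -> F) (G : 'I_k -> poly) :
  (forall i, G i \is d.-homog) -> (\sum_i c i *: G i) \is d.-homog.
Proof. by move=> h; apply: rpred_sum => i _; apply: rpredZ. Qed.

Lemma cw_inj (f : poly) : f \is d.-homog -> proj_reduced f -> cw f = 0 -> f = 0.
Proof.
move=> hf rf c0; apply: (vanish_reduced hd hf rf) => x.
pose w : 'rV[F]_n := \row_i x i.
have ex : f.@[x] = ev f w by apply: meval_eq => i; rewrite mxE.
case: (eqVneq w 0) => [w0|nz].
  rewrite ex w0 -(scale0r 0) (ev_scale _ _ hf) expr0n.
  by rewrite eqn0Ngt hd mul0r.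
have [_ [/(_ w nz) [j [c ew]] _]] := hP.
rewrite ex ew (ev_scale _ _ hf).
have := congr1 (fun r : 'rV[F]_N => r 0 j) c0; rewrite !mxE => ->.
by rewrite mulr0.
Qed.

Lemma supp_span k (X : k.-tuple 'rV[F]_N) (j : 'I_N) :
  (j \in supp <<X>>%VS) = [exists i : 'I_k, X`_i 0 j != 0].
Proof.
rewrite inE; apply/existsP/existsP => [[x /andP [xin xj]] | [i hi]].
  apply/existsP; apply: contraR xj => /existsPn h.
  rewrite (coord_span xin) summxE big1 // => i _.
  by rewrite mxE; have := h i; rewrite negbK => /eqP ->; rewrite mulr0.
exists X`_i; rewrite hi andbT; apply: memv_span; apply: mem_nth.
by rewrite size_tuple.
Qed.

Definition ZP k (G : 'I_k -> poly) : {set 'I_N} :=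
  [set j | [forall i, ev (G i) (P j) == 0]].

Lemma count_zeros k (G : 'I_k -> poly) :
  (forall i, G i \is d.-homog) -> n_common_zeros G = #|ZP G|.
Proof.
move=> hG.
have vs c w : c != 0 -> [forall i, ev (G i) (c *: w) == 0] = [forall i, ev (G i) w == 0].
  move=> cn; apply: eq_forallb => i; rewrite (ev_scale _ _ (hG i)) mulf_eq0 expf_eq0.
  by rewrite (negbTE cn) andbF.
pose phi (j : 'I_N) : 'rV[F]_n :=
  odflt 0 [pick w | normalized w && [exists c : F, (c != 0) && (w == c *: P j)]].
have phiP j : normalized (phi j) /\ exists2 c, c != 0 & phi j = c *: P j.
  rewrite /phi; case: pickP => [w /andP [nw /existsP [c /andP [cn /eqP e]]] | h] /=.
    by split=> //; exists c.
  have [nzP _] := hP.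
  have [c cn nc] := normalize_ex (nzP j).
  move: (h (c *: P j)); rewrite nc /=; have -> : [exists c0, (c0 != 0) && (c *: P j == c0 *: P j)] by apply/existsP; exists c; rewrite cn eqxx.
  by [].
have phi_inj : injective phi.
  move=> i j e; have [_ [ci cin ei]] := phiP i; have [_ [cj cjn ej]] := phiP j.
  have [_ [_ hinj]] := hP; apply: (hinj i j (cj / ci)).
  apply: (scalerI cin); rewrite scalerA mulrCA mulfV // mulr1 -ei -ej; exact: e.
rewrite /n_common_zeros -(card_imset _ phi_inj).
suff -> : [set v : 'rV[F]_n | normalized v && [forall i, ev (G i) v == 0]] = phi @: ZP G by [].

apply/setP => v; rewrite inE; apply/andP/imsetP => [[nv vv] | [j jZ ->]].
  have [_ [/(_ v (normalized_nz nv)) [j [c ev_]] _]] := hP.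
  have cn : c != 0 by apply: contraTneq (normalized_nz nv) => c0; rewrite ev_ c0 scale0r eqxx.
  exists j.
    by rewrite inE -(vs c) // -ev_.
  have [nphi [c' c'n ephi]] := phiP j.
  apply: (normalized_uniq nv nphi (a := c / c')).
  by rewrite ephi scalerA mulfVK.
have [nphi [c' c'n ephi]] := phiP j.
by split=> //; rewrite ephi vs //; move: jZ; rewrite inE.
Qed.

Lemma supp_card k (G : 'I_k -> poly) (X : k.-tuple 'rV[F]_N) :
  (forall i, G i \is d.-homog) -> (forall i : 'I_k, X`_i = cw (G i)) ->
  #|supp <<X>>%VS| = (N - n_common_zeros G)%N.
Proof.
move=> hG hX; rewrite count_zeros //.
have -> : ZP G = ~: supp <<X>>%VS.
  apply/setP => j; rewrite in_setC supp_span !inE negb_exists; apply: eq_forallb => i.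
  by rewrite hX mxE negbK.
have e := cardsC (supp <<X>>%VS); rewrite card_ord in e; lia.
Qed.


Lemma family_of_basis k (X : k.-tuple 'rV[F]_N) :
  free X -> (forall i : 'I_k, PRM P d X`_i) ->
  exists G : 'I_k -> poly, [/\ forall i, G i \is d.-homog,
     forall i, proj_reduced (G i), lin_indep G & forall i : 'I_k, X`_i = cw (G i)].
Proof.
move=> fX hX.
have : forall i : 'I_k, exists g : poly,
    [/\ g \is d.-homog, proj_reduced g & X`_i = cw g].
  move=> i; have [f [hf ef]] := hX i; exists (redp f); split.
  - exact: redp_homog.
  - exact: redp_reduced.
  - by rewrite ef; apply/rowP => j; rewrite !mxE /ev redp_eval.
move=> /fin_all_exists [G hG].
exists G; split => [i|i||i]; try by case: (hG i).
move=> c hc; move/freeP: fX; apply.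
have : cw (\sum_i c i *: G i) = 0.
  by rewrite hc; apply/rowP => j; rewrite !mxE /ev meval0.
rewrite cw_sum => h; apply: (etrans _ h); apply: eq_bigr => i _; by case: (hG i) => _ _ ->.
Qed.

Lemma ge_part r (D : {vspace 'rV[F]_N}) :
  (forall x, x \in D -> PRM P d x) -> \dim D = r ->
  (N - ebar F m d r <= #|supp D|)%N.
Proof.
move=> DC hdim; subst r.
have [eD fD] : (<<vbasis D>> = D)%VS /\ free (vbasis D).
  by case/andP: (vbasisP D) => /eqP.
have memD (i : 'I_(\dim D)) : (vbasis D)`_i \in D.
  by apply: vbasis_mem; apply: mem_nth; rewrite size_tuple.
have [G [hG rG liG XG]] := family_of_basis fD (fun i => DC _ (memD i)).
have sc := supp_card hG XG; rewrite eD in sc.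
have nb : (n_common_zeros G < N.+1)%N.
  rewrite ltnS count_zeros //; apply: (leq_trans (max_card _)); by rewrite card_ord.
have hle : (n_common_zeros G <= ebar F m d (\dim D))%N.
  rewrite /ebar; apply: (@leq_bigmax_cond _ _ (fun k : 'I_N.+1 => (k : nat)) (Ordinal nb)).
  by apply/classbP; exists G; split.
lia.
Qed.

Lemma le_part r (G : 'I_r -> poly) :
  (forall i, G i \is d.-homog) -> (forall i, proj_reduced (G i)) -> lin_indep G ->
  exists D : {vspace 'rV[F]_N}, [/\ forall x, x \in D -> PRM P d x, \dim D = r &
     #|supp D| = (N - n_common_zeros G)%N].
Proof.
move=> hG rG liG.
pose X := [tuple cw (G i) | i < r].
have XE (i : 'I_r) : X`_i = cw (G i) by rewrite -tnth_nth tnth_mktuple.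
exists <<X>>%VS; split.
- move=> x xin; exists (\sum_i coord X i x *: G i); split; first exact: homog_sum.
  change (x = cw (\sum_i coord X i x *: G i)); rewrite cw_sum {1}(coord_span xin).
  by apply: eq_bigr => i _; rewrite XE.
- have fX : free X.
    apply/freeP => c hc i.
    have h0 : \sum_i c i *: G i = 0.
      apply: cw_inj; [exact: homog_sum | exact: reduced_sum |].
      rewrite cw_sum; apply: (etrans _ hc); by apply: eq_bigr => j _; rewrite XE.
    exact: liG c h0 i.
  by move: fX; rewrite /free size_tuple => /eqP.
- by apply: supp_card.
Qed.

End Main.

Lemma bigmax_att N' (Pr : pred 'I_N') :
  (0 < \max_(k < N' | Pr k) (k : nat))%N ->
  exists2 k : 'I_N', Pr k & \max_(k < N' | Pr k) (k : nat) = k.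
Proof.
case: (posnP #|Pr|) => h.
  by move/card0_eq: h => h; rewrite big_pred0.
have [i0 hi0 e] := eq_bigmax_cond (fun k : 'I_N' => (k : nat)) h.
by exists i0.
Qed.

Lemma bigmin_le (I : eqType) (r : seq I) (Pr : pred I) (G : I -> nat) x i0 :
  i0 \in r -> Pr i0 -> (\big[minn/x]_(i <- r | Pr i) G i <= G i0)%N.
Proof.
elim: r => // i r IH; rewrite inE big_cons => /predU1P [-> ->|/IH h Pi0].
  exact: geq_minl.
case: ifP => _; last exact: h Pi0.
by rewrite geq_min (h Pi0) orbT.
Qed.

Theorem lemma6p2 (F : finFieldType) (m d r : nat)
    (P : 'I_(pm F m) -> 'rV[F]_m.+1) :
  (0 < m)%N -> is_proj_reps P ->
  (1 <= d)%N -> (1 <= r)%N -> (r <= 'C(m + d, d) - rd F m d)%N ->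
  ghw (PRM P d) r = (pm F m - ebar F m d r)%N.
Proof.
move=> m0 hP d1 r1 hr.
have lower : (pm F m - ebar F m d r <= ghw (PRM P d) r)%N.
  rewrite /ghw; apply: (big_ind (fun x => pm F m - ebar F m d r <= x)%N).
  - exact: leq_subr.
  - by move=> x y hx hy; rewrite leq_min hx hy.
  - move=> k /classbP [D [DC hdim <-]]; exact: (ge_part hP d1 DC hdim).
have upper : (ghw (PRM P d) r <= pm F m - ebar F m d r)%N.
  case: (posnP (ebar F m d r)) => [E0|Epos].
    rewrite E0 subn0 /ghw; apply: (big_ind (fun x => x <= pm F m)%N) => //.
    - by move=> x y hx _; rewrite geq_min hx.
    - by move=> k _; rewrite -ltnS.
  have := Epos; rewrite /ebar => /bigmax_att [k hk Ek].
  move/classbP: hk => [G [hG rG liG nG]].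
  have [D [DC hdim sD]] := le_part hP d1 hG rG liG.
  have hlt : (#|supp D| < (pm F m).+1)%N by rewrite sD ltnS leq_subr.
  rewrite /ghw; apply: (leq_trans (@bigmin_le _ _ _ _ _ (Ordinal hlt) (mem_index_enum _) _)).
    by apply/classbP; exists D; split.
  by rewrite /= sD nG /ebar Ek.
by apply/eqP; rewrite eqn_leq upper lower.
Qed.
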